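(* Let $p$ be a prime and let $f(t)\in\mathbb{Q}_p[[t]]$ with $f'(t)=\sum_{i\ge0}a_it^i\in\mathbb{Z}_p[[t]]$ and constant term $c\in\mathbb{Z}_p$. Let $\lambda=\min\big(\{v_p(a_{i-1}p^{i}/i)\}_{i\geq1}\cup\{v_p(c)\}\big)$ (assumed finite) and let $F(x)=f(px)/p^{\lambda}\in\mathbb{Z}_p[[x]]$ be the associated normalized power series, and assume $F$ converges on $\mathbb{Z}_p$. Fix a positive integer $N$, let $M=\min\{m\in\mathbb{Z}_{\ge1}: m-\lambda-\log_p(m)>N\}$, and write $F=F_M+F_\infty$ where $F_M$ consists of the terms of $F$ of degree at most $M$. Let $r\in\mathbb{Z}/p^N\mathbb{Z}$ be such that $F$ satisfies Hensel's lemma for $r$, and let $\tilde r\in\mathbb{Z}_p$ be the unique zero of $F$ lifting $r$ with $|r-\tilde r|_p<|F_M'(r)|_p$. Then $\tilde r\equiv r \pmod{p^{\,N-v_p(F_M'(r))}}$.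
   Context: $v_p$ is the $p$-adic valuation and $|\cdot|_p$ the $p$-adic absolute value; $\log_p$ is the real logarithm to base $p$. For $G\in\mathbb{Z}_p[[x]]$ converging on $\mathbb{Z}_p$ and $N$ a positive integer, let $\bar G$ denote the reduction of $G$ modulo $p^N$ (evaluation at $r\in\mathbb{Z}/p^N\mathbb{Z}$ means evaluating $G$ at any integer representative of $r$ and reducing mod $p^N$). One says $G$ satisfies Hensel's lemma for $r\in\mathbb{Z}/p^N\mathbb{Z}$ if $\bar G(r)\equiv 0 \pmod{p^N}$ and $\bar G'(r)^2\not\equiv 0\pmod{p^N}$. In the claim, $r$ is identified with an integer representative when computing $|r-\tilde r|_p$, $F_M'(r)$ and $v_p(F_M'(r))$. *)

(* Defs.v *)
From Stdlib Require Import Rdefinitions Raxioms RIneq Rpower.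
From mathcomp Require Import all_boot all_order all_algebra.
Set Implicit Arguments. Unset Strict Implicit. Unset Printing Implicit Defensive.
Import Order.TTheory GRing.Theory Num.Theory.
Local Open Scope ring_scope.

(* p-adic integers, represented by coherent sequences of integer            *)
(* approximations: x : nat -> int with x n.+1 = x n (mod p^n).  The element *)
(* of Z_p represented is lim x n; x n is its class modulo p^n.              *)
Definition coherent (p : nat) (x : nat -> int) : Prop :=
  forall n : nat, (x n.+1 == x n %[mod (p ^ n)%:Z])%Z.

(* v_p(x) >= k  (k an integer; vacuous for k <= 0; true for x = 0). *)
Definition vge (p : nat) (x : nat -> int) (k : int) : Prop :=
  forall n : nat, n%:Z <= k -> ((p ^ n)%:Z %| x n)%Z.

(* v_p(x) = k  (in particular x <> 0). *)
Definition vexact (p : nat) (x : nat -> int) (k : int) : Prop :=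
  vge p x k /\ ~ vge p x (k + 1).

(* A power series over Z_p is a coefficient family b : nat -> (nat -> int),
   b i being (the coherent sequence of) the i-th coefficient.
   psum p b x n K = the K-th partial sum  sum_{i<K} b_i x^i,  modulo p^n. *)
Definition psum (p : nat) (b : nat -> nat -> int) (x : nat -> int) (n K : nat)
  : int := \sum_(i < K) b i n * x n ^+ i.

Definition ps_conv_Zp (p : nat) (b : nat -> nat -> int) : Prop :=
  forall x, coherent p x -> forall n : nat, exists K : nat, forall K' : nat,
    (K <= K')%N -> (psum p b x n K' == psum p b x n K %[mod (p ^ n)%:Z])%Z.

Definition ps_val_cong (p : nat) (b : nat -> nat -> int) (x : nat -> int)
  (n : nat) (y : int) : Prop :=
  exists K : nat, forall K' : nat,
    (K <= K')%N -> (psum p b x n K' == y %[mod (p ^ n)%:Z])%Z.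

Definition ps_root (p : nat) (b : nat -> nat -> int) (x : nat -> int) : Prop :=
  forall n : nat, ps_val_cong p b x n 0.

Definition ps_deriv (b : nat -> nat -> int) : nat -> nat -> int :=
  fun i n => (i.+1)%:Z * b i.+1 n.

Definition cst (r : int) : nat -> int := fun _ => r.

(* Hensel's lemma condition for the residue class of r mod p^N:
   Fbar(r) = 0 mod p^N  and  Fbar'(r)^2 <> 0 mod p^N. *)
Definition hensel_at (p : nat) (b : nat -> nat -> int) (N : nat) (r : int)
  : Prop :=
  ps_val_cong p b (cst r) N 0 /\
  forall y : int, ps_val_cong p (ps_deriv b) (cst r) N y ->
    ~ ((p ^ N)%:Z %| y ^+ 2)%Z.

(* F_M'(r), where F_M = sum_{i<=M} b_i x^i; as an element of Z_p. *)
Definition truncM_deriv_at (b : nat -> nat -> int) (M : nat) (r : int)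
  : nat -> int :=
  fun n => \sum_(i < M) (i.+1)%:Z * b i.+1 n * r ^+ i.

(* lambda = min( { v_p(a_{i-1} p^i / i) }_{i>=1} U { v_p(c) } ),
   where v_p(a_{i-1} p^i / i) = v_p(a_{i-1}) + i - v_p(i).
   "lam is the minimum": lam is a lower bound, and it is attained. *)
Definition is_lambda (p : nat) (a : nat -> nat -> int) (c : nat -> int)
  (lam : int) : Prop :=
  ((forall i : nat, (1 <= i)%N -> vge p (a i.-1) (lam - i%:Z + (logn p i)%:Z))
   /\ vge p c lam)
  /\ ((exists2 i : nat, (1 <= i)%N & vexact p (a i.-1) (lam - i%:Z + (logn p i)%:Z))
      \/ vexact p c lam).

(* F(x) = f(p x) / p^lam, where f = c + sum_{i>=1} (a_{i-1}/i) t^i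
   (the unique series with f' = sum a_i t^i and constant term c).
   Cleared of denominators, coefficientwise in Z_p:
     p^lam * b_0 = c,   i * p^lam * b_i = a_{i-1} * p^i  (i >= 1). *)
Definition is_normalized (p : nat) (a : nat -> nat -> int) (c : nat -> int)
  (lam : nat) (b : nat -> nat -> int) : Prop :=
  (forall n : nat, ((p ^ lam)%:Z * b 0%N n == c n %[mod (p ^ n)%:Z])%Z) /\
  (forall i n : nat, (1 <= i)%N ->
     (i%:Z * (p ^ lam)%:Z * b i n == a i.-1 n * (p ^ i)%:Z %[mod (p ^ n)%:Z])%Z).

Definition M_cond (p lam N m : nat) : Prop :=
  Rlt (INR N) (Rminus (Rminus (INR m) (INR lam)) (Rdiv (ln (INR m)) (ln (INR p)))).

Definition is_M (p lam N M : nat) : Prop :=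
  (1 <= M)%N /\ M_cond p lam N M /\
  forall m : nat, (1 <= m)%N -> (m < M)%N -> ~ M_cond p lam N m.

(* Main.v *)
Require Import Defs.
From Stdlib Require Import Reals Lra.
From mathcomp Require Import all_boot all_order all_algebra.
From mathcomp Require Import zify ring.
Import Order.TTheory GRing.Theory Num.Theory.
Local Open Scope ring_scope.

Lemma dvdz_pp (p m n : nat) : (m <= n)%N -> ((p ^ m)%:Z %| (p ^ n)%:Z)%Z.
Proof. by move=> h; rewrite dvdzE /=; apply: dvdn_exp2l. Qed.

Lemma coh_le p x m n : coherent p x -> (m <= n)%N -> ((p ^ m)%:Z %| x n - x m)%Z.
Proof.
move=> hc; elim: n => [|n IH]; first by rewrite leqn0 => /eqP ->; rewrite subrr dvdz0.
rewrite leq_eqVlt => /orP [/eqP <-|]; first by rewrite subrr dvdz0.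
rewrite ltnS => hmn.
have -> : x n.+1 - x m = (x n.+1 - x n) + (x n - x m) by ring.
apply: rpredD; last exact: IH.
apply: dvdz_trans (@dvdz_pp p _ _ hmn) _.
by rewrite -eqz_mod_dvd; apply: hc.
Qed.

Lemma tail p a c lam b N i : prime p -> is_normalized p a c lam b ->
  coherent p (b i) -> (N + lam <= i)%N -> ((p ^ N)%:Z %| i%:Z * b i N)%Z.
Proof.
move=> pp [_ hn] hc hi.
case: N hi => [|N] hi; first by rewrite expn0 dvdzE dvd1n.
have i1 : (1 <= i)%N by move: hi; clear; lia.
have h := hn i (N.+1 + lam)%N i1.
have hY : ((p ^ (N.+1 + lam))%:Z %| a i.-1 (N.+1 + lam)%N * (p ^ i)%:Z)%Z.
  by apply: dvdz_mull; apply: dvdz_pp.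
have hX : ((p ^ (N.+1 + lam))%:Z %| i%:Z * (p ^ lam)%:Z * b i (N.+1 + lam)%N)%Z.
  move: h; rewrite eqz_mod_dvd => h.
  by have := rpredD h hY; rewrite subrK.
have hZ : ((p ^ N.+1)%:Z %| i%:Z * b i (N.+1 + lam)%N)%Z.
  move: hX.
  have -> : i%:Z * (p ^ lam)%:Z * b i (N.+1 + lam)%N = (p ^ lam)%:Z * (i%:Z * b i (N.+1 + lam)%N) by ring.
  rewrite expnD PoszM (mulrC (p ^ N.+1)%:Z) dvdz_mul2l // -lt0n expn_gt0 prime_gt0 //.
have -> : i%:Z * b i N.+1 = i%:Z * b i (N.+1 + lam)%N - i%:Z * (b i (N.+1 + lam)%N - b i N.+1) by ring.
apply: rpredB => //; apply: dvdz_mull; apply: coh_le => //; move: hi; clear; lia.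
Qed.

Local Open Scope R_scope.
Lemma Mbound p lam N M : prime p -> is_M p lam N M -> (N + lam < M)%N.
Proof.
move=> pp [hM1 [hc _]]; move: hc; rewrite /M_cond => hc.
have p1 : (1 < INR p) by apply: (lt_INR 1); have := prime_gt1 pp; move/ssrnat.ltP.
have lp : (0 < ln (INR p)) by rewrite -ln_1; apply: ln_increasing; lra.
have m1 : (1 <= INR M) by apply: (le_INR 1); move/ssrnat.leP: hM1.
have lm : (0 <= ln (INR M)).
  rewrite -ln_1; case: (Rle_lt_or_eq_dec _ _ m1) => h; last by rewrite h; lra.
  by apply: Rlt_le; apply: ln_increasing; lra.
have hd : (0 <= ln (INR M) / ln (INR p)).
  by apply: Rmult_le_pos => //; apply: Rlt_le; apply: Rinv_0_lt_compat.
have : (INR (N + lam) < INR M) by rewrite plus_INR; lra.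
by move/INR_lt/ssrnat.ltP.
Qed.
Local Close Scope R_scope.
Lemma key (p e N : nat) (d T Q : int) : prime p -> (e < N)%N ->
  ((p ^ e.+1)%:Z %| d)%Z -> ((p ^ e)%:Z %| T)%Z -> ~ ((p ^ e.+1)%:Z %| T)%Z ->
  ((p ^ N)%:Z %| d * T + d ^+ 2 * Q)%Z -> ((p ^ (N - e))%:Z %| d)%Z.
Proof.
move=> pp eN hd hT hT1 hS.
have [->|d0] := eqVneq d 0; first exact: dvdz0.
have T0 : T != 0 by apply/negP => /eqP T0; apply: hT1; rewrite T0 dvdz0.
have ad : (0 < `|d|)%N by rewrite absz_gt0.
have aT : (0 < `|T|)%N by rewrite absz_gt0.
set L := logn p `|d|.
have hL : (e.+1 <= L)%N by rewrite -pfactor_dvdn.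
have hTl : ~ (e.+1 <= logn p `|T|)%N by rewrite -pfactor_dvdn // -dvdzE.
rewrite dvdzE /= pfactor_dvdn //; rewrite -/L.
case: (leqP (N - e) L) => // hlt; exfalso.
have hdL : ((p ^ L)%:Z %| d)%Z by rewrite dvdzE /= pfactor_dvdn.
have eL : logn p `|d| = L by [].
clearbody L.
have h1 : ((p ^ (e + L).+1)%:Z %| d ^+ 2 * Q)%Z.
  apply: dvdz_mulr; apply: (dvdz_trans (n := (p ^ L)%:Z * (p ^ L)%:Z)).
    by rewrite -PoszM -expnD; apply: dvdz_pp; move: hL; clear; lia.
  by rewrite expr2; apply: dvdz_mul.
have h2 : ((p ^ (e + L).+1)%:Z %| d * T + d ^+ 2 * Q)%Z.
  by apply: dvdz_trans hS; apply: dvdz_pp; move: hlt eN; clear; lia.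
have h3 : ((p ^ (e + L).+1)%:Z %| d * T)%Z.
  by have := rpredB h2 h1; rewrite addrK.
move: h3; rewrite dvdzE /= abszM pfactor_dvdn ?muln_gt0 ?ad ?aT // lognM // eL.
move=> h; apply: hTl; move: h hlt; clear; lia.
Qed.
Lemma term (r d : int) i : exists q,
  (r + d) ^+ i.+1 = r ^+ i.+1 + (i.+1)%:Z * r ^+ i * d + d ^+ 2 * q.
Proof.
elim: i => [|i [q IH]]; first by exists 0; rewrite !expr1 expr0; ring.
exists (r * q + (i.+1)%:Z * r ^+ i + d * q).
rewrite exprS IH !exprS.
have -> : (i.+2)%:Z = (i.+1)%:Z + 1 by rewrite -addn1 PoszD.
ring.
Qed.

Lemma taylor (be : nat -> int) (r d : int) K : exists Q,
  \sum_(i < K.+1) be i * (r + d) ^+ i - \sum_(i < K.+1) be i * r ^+ i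
  = d * \sum_(i < K) (i.+1)%:Z * be i.+1 * r ^+ i + d ^+ 2 * Q.
Proof.
elim: K => [|K [Q IH]].
  by exists 0; rewrite !big_ord1 big_ord0 !expr0; ring.
have [q hq] := term r d K.
exists (Q + be K.+1 * q).
rewrite big_ord_recr [X in _ - X]big_ord_recr [X in d * X]big_ord_recr /=.
have -> : \sum_(i < K.+1) be i * (r + d) ^+ i + be K.+1 * (r + d) ^+ K.+1 -
   (\sum_(i < K.+1) be i * r ^+ i + be K.+1 * r ^+ K.+1) =
   (\sum_(i < K.+1) be i * (r + d) ^+ i - \sum_(i < K.+1) be i * r ^+ i)
   + be K.+1 * ((r + d) ^+ K.+1 - r ^+ K.+1) by ring.
rewrite IH hq; ring.
Qed.

Lemma T_coh p b M r m n : (forall i, coherent p (b i)) -> (m <= n)%N ->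
  ((p ^ m)%:Z %| truncM_deriv_at b M r n - truncM_deriv_at b M r m)%Z.
Proof.
move=> hb hmn; rewrite /truncM_deriv_at -sumrB; apply: rpred_sum => i _.
have -> : (i.+1)%:Z * b i.+1 n * r ^+ i - (i.+1)%:Z * b i.+1 m * r ^+ i
  = (i.+1)%:Z * (b i.+1 n - b i.+1 m) * r ^+ i by ring.
by apply: dvdz_mulr; apply: dvdz_mull; apply: coh_le.
Qed.

Theorem lemma3p6
  (p : nat) (a : nat -> nat -> int) (c : nat -> int) (lam : nat)
  (b : nat -> nat -> int) (N M : nat) (r : int) (rt : nat -> int) (e : nat) :
  prime p ->
  (forall i : nat, coherent p (a i)) ->
  coherent p c ->
  is_lambda p a c lam%:Z ->
  (forall i : nat, coherent p (b i)) ->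
  is_normalized p a c lam b ->
  ps_conv_Zp p b ->
  (0 < N)%N ->
  is_M p lam N M ->
  hensel_at p b N r ->
  coherent p rt ->
  ps_root p b rt ->
  vexact p (truncM_deriv_at b M r) e%:Z ->
  vge p (fun n => rt n - r) (e%:Z + 1) ->
  vge p (fun n => rt n - r) (N%:Z - e%:Z).
Proof.
move=> pp ha hc hlam hb hnorm hconv N0 hM [hF _] hrt hroot [hT hT1] hd.
case: (leqP N e) => hNe.
  move=> n hn; have -> : n = 0%N by move: hn hNe; clear; lia.
  by rewrite expn0 dvdzE dvd1n.
have hMb := @Mbound _ _ _ _ pp hM.
set TN := truncM_deriv_at b M r N.
have T1 : ~ ((p ^ e.+1)%:Z %| TN)%Z.
  move=> h; apply: hT1 => n hn.
  have hn' : (n <= e.+1)%N by move: hn; clear; lia.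
  have -> : truncM_deriv_at b M r n = TN - (TN - truncM_deriv_at b M r n) by ring.
  apply: rpredB; first by apply: dvdz_trans h; apply: dvdz_pp.
  apply: T_coh => //; move: hn' hNe; clear; lia.
have T0 : ((p ^ e)%:Z %| TN)%Z.
  have h := hT e (lexx _).
  have -> : TN = (TN - truncM_deriv_at b M r e) + truncM_deriv_at b M r e by ring.
  apply: rpredD => //; apply: T_coh => //; move: hNe; clear; lia.
have [K1 hK1] := hF.
have [K2 hK2] := hroot N.
set K := maxn (maxn K1 K2) M.
have S1 := hK1 K.+1 (leq_trans (leq_trans (leq_maxl K1 K2) (leq_maxl _ M)) (leqnSn _)).
have S2 := hK2 K.+1 (leq_trans (leq_trans (leq_maxr K1 K2) (leq_maxl _ M)) (leqnSn _)).
move: S1 S2; rewrite /psum /cst !eqz_mod_dvd !subr0 => S1 S2.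
have [d hx] : exists d, rt N = r + d by exists (rt N - r); ring.
rewrite hx in S2.
have [Q hQ] := taylor (fun i => b i N) r d K.
have hS : ((p ^ N)%:Z %| d * \sum_(i < K) (i.+1)%:Z * b i.+1 N * r ^+ i + d ^+ 2 * Q)%Z.
  by rewrite -hQ; apply: rpredB.
have hD : ((p ^ N)%:Z %| \sum_(i < K) (i.+1)%:Z * b i.+1 N * r ^+ i - TN)%Z.
  rewrite /TN /truncM_deriv_at.
  rewrite -(big_mkord xpredT (fun i => (i.+1)%:Z * b i.+1 N * r ^+ i)).
  rewrite -(big_mkord xpredT (fun i => (i.+1)%:Z * b i.+1 N * r ^+ i)).
  rewrite (big_cat_nat (leq0n M) (leq_maxr (maxn K1 K2) M)).
  rewrite addrAC subrr add0r big_seq; apply: rpred_sum => i; rewrite mem_index_iota => /andP [hi _].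
  apply: dvdz_mulr.
  have hh : (N + lam <= i.+1)%N by move: hi hMb; clear; lia.
  exact: (@tail p a c lam b N i.+1 pp hnorm (hb _) hh).
have hS' : ((p ^ N)%:Z %| d * TN + d ^+ 2 * Q)%Z.
  have -> : d * TN + d ^+ 2 * Q = (d * \sum_(i < K) (i.+1)%:Z * b i.+1 N * r ^+ i + d ^+ 2 * Q)
     - d * (\sum_(i < K) (i.+1)%:Z * b i.+1 N * r ^+ i - TN) by ring.
  by apply: rpredB; [exact: hS | exact: dvdz_mull hD].
have hd1 : ((p ^ e.+1)%:Z %| d)%Z.
  have he : ((e.+1)%:Z <= e%:Z + 1) by rewrite -addn1 PoszD.
  have h := hd e.+1 he.
  have -> : d = (rt N - rt e.+1) + (rt e.+1 - r) by rewrite hx; ring.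
  by apply: rpredD => //; apply: coh_le => //; move: hNe; clear; lia.
have hk := @key _ _ _ _ _ _ pp hNe hd1 T0 T1 hS'.
move=> n hn.
have hn' : (n <= N - e)%N by move: hn hNe; clear; lia.
have -> : rt n - r = d - (rt N - rt n) by rewrite hx; ring.
apply: rpredB; first by apply: dvdz_trans hk; apply: dvdz_pp.
apply: coh_le => //; move: hn'; clear; lia.
Qed.
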